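(* Let $\theta\mapsto P_\theta$ ($\theta$ in an open subset of $\mathbb{R}^p$) be a family of regular $X\times X$ transition matrices, continuously differentiable in $\theta$, with $(P_\theta)_{ij}=0$ implying $\nabla_\theta(P_\theta)_{ij}=0$, and with stationary distribution $\pi_\theta$. Fix $c\in\mathbb{R}^X$ and an initial distribution $\pi_0$ independent of $\theta$. Simulate $x_0\sim\pi_0$ and $x_1,\dots,x_N$ with transition matrix $P_\theta$, set $S_0=0$, $S_k=S_{k-1}+\nabla_\theta (P_\theta)_{x_{k-1}x_k}/(P_\theta)_{x_{k-1}x_k}$ for $k=1,\dots,N$, and define the score function estimator $\widehat{\nabla_\theta C}_N=\frac1N\sum_{k=1}^N c(x_k)S_k$. Then there exist constants $K_1,K_2$ independent of $N$ such that for all $N\ge1$: (a) $\bigl\|\mathbb{E}\{\widehat{\nabla_\theta C}_N\}-\nabla_\theta(c'\pi_\theta)\bigr\|\le K_1/N$ (bias $O(1/N)$); (b) the variance (trace of the covariance matrix) of $\widehat{\nabla_\theta C}_N$ is at most $K_2N$ (variance $O(N)$).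
   Context: A transition matrix is regular if some power has all entries strictly positive; $\pi_\theta$ is its unique stationary distribution. Gradients with respect to $\theta$ are taken entrywise. *)

(* Defs.v *)
From Stdlib Require Import Reals List Lia Lra.
Open Scope R_scope.

(* State space X = {0,...,n-1}; parameter space R^p embedded as functions
   nat -> R vanishing at coordinates >= p. *)

Fixpoint rsum (n : nat) (f : nat -> R) : R :=
  match n with
  | O => 0
  | S k => rsum k f + f k
  end.

Fixpoint mpow (n : nat) (A : nat -> nat -> R) (m : nat) : nat -> nat -> R :=
  match m with
  | O => fun i j => if Nat.eqb i j then 1 else 0
  | S m' => fun i j => rsum n (fun k => mpow n A m' i k * A k j)
  end.

Definition is_transition (n : nat) (A : nat -> nat -> R) : Prop :=
  (forall i j, (i < n)%nat -> (j < n)%nat -> 0 <= A i j) /\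
  (forall i, (i < n)%nat -> rsum n (fun j => A i j) = 1).

Definition regular (n : nat) (A : nat -> nat -> R) : Prop :=
  exists m, forall i j, (i < n)%nat -> (j < n)%nat -> 0 < mpow n A m i j.

Definition is_distribution (n : nat) (v : nat -> R) : Prop :=
  (forall i, (i < n)%nat -> 0 <= v i) /\ rsum n v = 1.

Definition is_stationary (n : nat) (A : nat -> nat -> R) (v : nat -> R) : Prop :=
  is_distribution n v /\
  forall j, (j < n)%nat -> rsum n (fun i => v i * A i j) = v j.

Definition in_Rp (p : nat) (th : nat -> R) : Prop :=
  forall l, (p <= l)%nat -> th l = 0.

Definition close (p : nat) (th th' : nat -> R) (eps : R) : Prop :=
  forall l, (l < p)%nat -> Rabs (th' l - th l) < eps.

Definition open_Rp (p : nat) (U : (nat -> R) -> Prop) : Prop :=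
  (forall th, U th -> in_Rp p th) /\
  forall th, U th -> exists eps, 0 < eps /\
    forall th', in_Rp p th' -> close p th th' eps -> U th'.

Definition shift (th : nat -> R) (l : nat) (t : R) : nat -> R :=
  fun m => if Nat.eqb m l then th m + t else th m.

Fixpoint paths (n m : nat) : list (list nat) :=
  match m with
  | O => nil :: nil
  | S m' => flat_map (fun s => map (fun x => x :: s) (seq 0 n)) (paths n m')
  end.

Definition path_prob (pi0 : nat -> R) (A : nat -> nat -> R) (N : nat)
    (x : list nat) : R :=
  pi0 (nth 0 x 0%nat) *
  fold_right Rmult 1
    (map (fun k => A (nth (k - 1) x 0%nat) (nth k x 0%nat)) (seq 1 N)).

Definition expect (n : nat) (pi0 : nat -> R) (A : nat -> nat -> R) (N : nat)
    (f : list nat -> R) : R :=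
  fold_right Rplus 0 (map (fun x => path_prob pi0 A N x * f x) (paths n (S N))).

Definition score (A : nat -> nat -> R) (dA : nat -> nat -> nat -> R)
    (x : list nat) (k l : nat) : R :=
  rsum k (fun j => let a := nth j x 0%nat in let b := nth (S j) x 0%nat in
                   dA a b l / A a b).

Definition estimator (c : nat -> R) (A : nat -> nat -> R)
    (dA : nat -> nat -> nat -> R) (N : nat) (x : list nat) (l : nat) : R :=
  / INR N * rsum N (fun k => c (nth (S k) x 0%nat) * score A dA x (S k) l).

(* Main.v *)
Require Import Defs.
From Stdlib Require Import Reals List Lia Lra Psatz FunctionalExtensionality.
From Coquelicot Require Import Coquelicot.
Import Defs.
Open Scope R_scope.

Lemma rsum_ext m f g : (forall k, (k < m)%nat -> f k = g k) -> rsum m f = rsum m g.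
Proof. induction m; simpl; intros H; auto. rewrite IHm by (intros; apply H; lia). rewrite H by lia; auto. Qed.

Lemma rsum_plus m f g : rsum m (fun k => f k + g k) = rsum m f + rsum m g.
Proof. induction m; simpl; [lra|]. rewrite IHm; lra. Qed.

Lemma rsum_minus m f g : rsum m (fun k => f k - g k) = rsum m f - rsum m g.
Proof. induction m; simpl; [lra|]. rewrite IHm; lra. Qed.

Lemma rsum_scal m c f : rsum m (fun k => c * f k) = c * rsum m f.
Proof. induction m; simpl; [lra|]. rewrite IHm; lra. Qed.

Lemma rsum_scal_r m c f : rsum m (fun k => f k * c) = rsum m f * c.
Proof. induction m; simpl; [lra|]. rewrite IHm; lra. Qed.

Lemma rsum_0 m : rsum m (fun _ => 0) = 0.
Proof. induction m; simpl; [lra|]. rewrite IHm; lra. Qed.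

Lemma rsum_const m c : rsum m (fun _ => c) = INR m * c.
Proof. induction m; simpl rsum; [simpl; lra|]. rewrite IHm, S_INR; lra. Qed.

Lemma rsum_le m f g : (forall k, (k < m)%nat -> f k <= g k) -> rsum m f <= rsum m g.
Proof. induction m; simpl; intros H; [lra|]. assert (f m <= g m) by (apply H; lia).
  assert (rsum m f <= rsum m g) by (apply IHm; intros; apply H; lia). lra. Qed.

Lemma rsum_nonneg m f : (forall k, (k < m)%nat -> 0 <= f k) -> 0 <= rsum m f.
Proof. intros H. rewrite <- (rsum_0 m). apply rsum_le; auto. Qed.

Lemma rsum_comm m q f : rsum m (fun i => rsum q (fun j => f i j)) = rsum q (fun j => rsum m (fun i => f i j)).
Proof. induction m; simpl. rewrite rsum_0; auto. rewrite IHm, <- rsum_plus; auto. Qed.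

Lemma rsum_abs m f : Rabs (rsum m f) <= rsum m (fun k => Rabs (f k)).
Proof. induction m; simpl. rewrite Rabs_R0; lra. eapply Rle_trans; [apply Rabs_triang|]. lra. Qed.

Lemma rsum_term_le m f k : (forall i, (i < m)%nat -> 0 <= f i) -> (k < m)%nat -> f k <= rsum m f.
Proof. induction m; intros H Hk; [lia|]. simpl. destruct (Nat.eq_dec k m).
  subst. assert (0 <= rsum m f) by (apply rsum_nonneg; intros; apply H; lia). lra.
  assert (f k <= rsum m f) by (apply IHm; [intros; apply H; lia| lia]). assert (0 <= f m) by (apply H; lia). lra. Qed.

Lemma rsum_delta m i f : (i < m)%nat -> rsum m (fun j => (if Nat.eqb i j then 1 else 0) * f j) = f i.
Proof. induction m; intros Hi; [lia|]. simpl. destruct (Nat.eq_dec i m).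
  subst. rewrite Nat.eqb_refl. rewrite (rsum_ext _ _ (fun _ => 0)). rewrite rsum_0; lra.
  intros k Hk. destruct (Nat.eqb _ _) eqn:E; [apply Nat.eqb_eq in E; lia| lra].
  rewrite IHm by lia. destruct (Nat.eqb _ _) eqn:E; [apply Nat.eqb_eq in E; lia| lra]. Qed.

Lemma rsum_delta' m i f : (i < m)%nat -> rsum m (fun j => f j * (if Nat.eqb j i then 1 else 0)) = f i.
Proof. intros Hi. rewrite <- (rsum_delta m i f Hi). apply rsum_ext. intros k _.
  destruct (Nat.eqb_spec i k), (Nat.eqb_spec k i); subst; try lia; lra. Qed.

Lemma rsum_delta1 m i : (i < m)%nat -> rsum m (fun j => if Nat.eqb i j then 1 else 0) = 1.
Proof. intros Hi. rewrite (rsum_ext _ _ (fun j => (if Nat.eqb i j then 1 else 0) * 1)). apply (rsum_delta m i (fun _ => 1) Hi). intros; ring. Qed.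

Lemma rsum_telescope m u : rsum m (fun k => u k - u (S k)) = u O - u m.
Proof. induction m; simpl; [lra|]. rewrite IHm; lra. Qed.

Lemma rsum_sq_le m a : Rsqr (rsum m a) <= INR m * rsum m (fun k => Rsqr (a k)).
Proof. induction m; simpl rsum. unfold Rsqr; simpl; lra.
  rewrite S_INR. set (A := rsum m a) in *. set (S := rsum m (fun k => Rsqr (a k))) in *.
  assert (HS : 0 <= S) by (apply rsum_nonneg; intros; apply Rle_0_sqr).
  assert (Hm : 0 <= INR m) by apply pos_INR. unfold Rsqr in *.
  destruct (Req_dec (INR m) 0) as [E|E].
  rewrite E in IHm. assert (A = 0) by nra. subst A. rewrite H, E. nra.
  assert (0 < INR m) by lra.
  assert (X : INR m * (S + INR m * (a m * a m) - 2 * A * a m) >= 0).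
  { assert (0 <= (A - INR m * a m) * (A - INR m * a m)) by apply Rle_0_sqr. nra. }
  assert (S + INR m * (a m * a m) - 2 * A * a m >= 0).
  { destruct (Rlt_or_le (S + INR m * (a m * a m) - 2 * A * a m) 0); [|lra].
    assert (INR m * (S + INR m * (a m * a m) - 2 * A * a m) < 0) by nra. lra. }
  nra. Qed.

Definition lsum {T} (L : list T) (F : T -> R) : R := fold_right Rplus 0 (map F L).

Lemma lsum_app {T} (L1 L2 : list T) F : lsum (L1 ++ L2) F = lsum L1 F + lsum L2 F.
Proof. unfold lsum. induction L1; simpl; [lra|]. rewrite IHL1; lra. Qed.

Lemma lsum_plus {T} (L : list T) F G : lsum L (fun x => F x + G x) = lsum L F + lsum L G.
Proof. unfold lsum. induction L; simpl; [lra|]. rewrite IHL; lra. Qed.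

Lemma lsum_scal {T} (L : list T) c F : lsum L (fun x => c * F x) = c * lsum L F.
Proof. unfold lsum. induction L; simpl; [lra|]. rewrite IHL; lra. Qed.

Lemma lsum_ext {T} (L : list T) F G : (forall x, F x = G x) -> lsum L F = lsum L G.
Proof. intros H. unfold lsum. induction L; simpl; auto. rewrite IHL, H; auto. Qed.

Lemma lsum_rsum {T} (L : list T) m F : lsum L (fun x => rsum m (fun k => F k x)) = rsum m (fun k => lsum L (F k)).
Proof. induction m; simpl. unfold lsum. induction L; simpl; auto; lra.
  rewrite lsum_plus, IHm; auto. Qed.

Lemma lsum_seq0 n F : lsum (seq 0 n) F = rsum n F.
Proof. induction n. reflexivity. rewrite seq_S, lsum_app, IHn. unfold lsum; simpl; lra. Qed.

Lemma lsum_paths_S n m F : lsum (paths n (S m)) F = lsum (paths n m) (fun s => rsum n (fun a => F (a :: s))).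
Proof. simpl. generalize (paths n m). intros L. induction L; simpl; auto.
  rewrite lsum_app, IHL. unfold lsum at 3. simpl. fold (lsum L (fun s => rsum n (fun a0 => F (a0 :: s)))).
  f_equal. rewrite <- lsum_seq0. unfold lsum. rewrite map_map. auto. Qed.

Lemma expect_lsum n v A N f : expect n v A N f = lsum (paths n (S N)) (fun x => path_prob v A N x * f x).
Proof. reflexivity. Qed.

Lemma expect_0 n v A f : expect n v A 0 f = rsum n (fun a => v a * f (a :: nil)).
Proof. rewrite expect_lsum, lsum_paths_S. unfold lsum; simpl. unfold path_prob; simpl. 
  replace (rsum n (fun a => v a * 1 * f (a :: nil))) with (rsum n (fun a => v a * f (a :: nil))) by (apply rsum_ext; intros; ring). lra. Qed.

Lemma path_prob_S v A N a s : path_prob v A (S N) (a :: s) = v a * path_prob (A a) A N s.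
Proof. unfold path_prob.
  assert (E : map (fun k => A (nth (k-1) (a::s) 0%nat) (nth k (a::s) 0%nat)) (seq 1 (S N)) =
     A a (nth 0 s 0%nat) :: map (fun k => A (nth (k-1) s 0%nat) (nth k s 0%nat)) (seq 1 N)).
  { change (seq 1 (S N)) with (1%nat :: seq 2 N). simpl map at 1. f_equal.
    rewrite <- seq_shift, map_map. apply map_ext_in. intros k Hk. apply in_seq in Hk.
    destruct k; [lia|]. simpl. replace (k - 0)%nat with k by lia. auto. }
  rewrite E. simpl nth at 1. simpl fold_right. ring. Qed.

Lemma expect_S n v A N f : expect n v A (S N) f = rsum n (fun a => v a * expect n (A a) A N (fun s => f (a :: s))).
Proof. rewrite expect_lsum, lsum_paths_S. 
  rewrite (lsum_ext _ _ (fun s => rsum n (fun a => v a * (path_prob (A a) A N s * f (a :: s))))).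
  rewrite lsum_rsum. apply rsum_ext. intros. rewrite lsum_scal. auto.
  intros s. apply rsum_ext. intros. rewrite path_prob_S. ring. Qed.

Lemma expect_plus n v A N f g : expect n v A N (fun x => f x + g x) = expect n v A N f + expect n v A N g.
Proof. rewrite !expect_lsum, <- lsum_plus. apply lsum_ext; intros; ring. Qed.

Lemma expect_scal n v A N c f : expect n v A N (fun x => c * f x) = c * expect n v A N f.
Proof. rewrite !expect_lsum, <- lsum_scal. apply lsum_ext; intros; ring. Qed.

Lemma expect_ext n v A N f g : (forall x, f x = g x) -> expect n v A N f = expect n v A N g.
Proof. intros H. rewrite !expect_lsum. apply lsum_ext; intros; rewrite H; auto. Qed.

Lemma expect_rsum n v A N m F : expect n v A N (fun x => rsum m (fun k => F k x)) = rsum m (fun k => expect n v A N (F k)).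
Proof. rewrite expect_lsum. rewrite (lsum_ext _ _ (fun x => rsum m (fun k => path_prob v A N x * F k x))).
  rewrite lsum_rsum. apply rsum_ext. intros. rewrite expect_lsum. auto.
  intros x. rewrite <- rsum_scal. auto. Qed.

Lemma expect_minus n v A N f g : expect n v A N (fun x => f x - g x) = expect n v A N f - expect n v A N g.
Proof. replace (expect n v A N f - expect n v A N g) with (expect n v A N f + (- 1) * expect n v A N g) by ring.
  rewrite <- expect_scal, <- expect_plus. apply expect_ext; intros; ring. Qed.

Definition allin (n : nat) (x : list nat) : Prop := forall i, (nth i x 0%nat < n)%nat.

Definition stoch (n : nat) (A : nat -> nat -> R) : Prop :=
  (forall i j, (i < n)%nat -> (j < n)%nat -> 0 <= A i j) /\
  (forall i, (i < n)%nat -> rsum n (fun j => A i j) = 1).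

Lemma expect_mono n v A N f g : (0 < n)%nat -> stoch n A -> (forall a, (a < n)%nat -> 0 <= v a) ->
  (forall x, allin n x -> f x <= g x) -> expect n v A N f <= expect n v A N g.
Proof. intros Hn [HA _]. revert v f g. induction N; intros v f g Hv Hfg.
  rewrite !expect_0. apply rsum_le. intros a Ha. apply Rmult_le_compat_l; auto. apply Hfg.
  intros [|i]; simpl; auto. destruct i; auto.
  rewrite !expect_S. apply rsum_le. intros a Ha. apply Rmult_le_compat_l; auto. apply IHN.
  intros; apply HA; auto. intros s Hs. apply Hfg. intros [|i]; simpl; auto.
Qed.

Lemma expect_const n v A N c : stoch n A -> expect n v A N (fun _ => c) = c * rsum n v.
Proof. intros [_ HA]. revert v. induction N; intros v.
  rewrite expect_0. rewrite <- rsum_scal. apply rsum_ext; intros; ring.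
  rewrite expect_S. rewrite <- rsum_scal. apply rsum_ext. intros a Ha. rewrite IHN, HA; auto. ring. Qed.

Fixpoint lpow (n : nat) (A : nat -> nat -> R) (m : nat) : nat -> nat -> R :=
  match m with
  | O => fun i j => if Nat.eqb i j then 1 else 0
  | S m' => fun i j => rsum n (fun k => A i k * lpow n A m' k j)
  end.

Definition hg n A m (g : nat -> R) b := rsum n (fun e => lpow n A m b e * g e).
Definition mu n A (v : nat -> R) j e := rsum n (fun i => v i * lpow n A j i e).

Section M.
Variable n : nat.
Variable A : nat -> nat -> R.
Hypothesis HA : stoch n A.
Hypothesis Hn : (0 < n)%nat.

Lemma hg_0 g b : (b < n)%nat -> hg n A 0 g b = g b.
Proof. intros Hb. unfold hg. simpl. apply rsum_delta; auto. Qed.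

Lemma hg_S m g b : hg n A (S m) g b = rsum n (fun a => A b a * hg n A m g a).
Proof. unfold hg. simpl. rewrite (rsum_ext _ _ (fun e => rsum n (fun k => A b k * lpow n A m k e * g e))).
  rewrite rsum_comm. apply rsum_ext. intros. rewrite <- rsum_scal. apply rsum_ext; intros; ring.
  intros. rewrite <- rsum_scal_r. auto. Qed.

Lemma marg N : forall k v g, (k <= N)%nat ->
  expect n v A N (fun s => g (nth k s 0%nat)) = rsum n (fun b => v b * hg n A k g b).
Proof. destruct HA as [_ Hr]. induction N; intros k v g Hk.
  - assert (k = 0%nat) by lia. subst. rewrite expect_0. apply rsum_ext. intros. rewrite hg_0; auto.
  - rewrite expect_S. destruct k.
    + apply rsum_ext. intros a Ha. simpl nth. rewrite expect_const by auto. rewrite Hr, hg_0; auto. simpl. ring.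
    + apply rsum_ext. intros a Ha. simpl nth. rewrite IHN by lia. rewrite hg_S. auto.
Qed.

Lemma M0F N : forall k v F g, (k <= N)%nat ->
  expect n v A N (fun s => F (nth 0 s 0%nat) * g (nth k s 0%nat)) = rsum n (fun b => v b * F b * hg n A k g b).
Proof. destruct HA as [_ Hr]. destruct N; intros k v F g Hk.
  - assert (k = 0%nat) by lia. subst. rewrite expect_0. apply rsum_ext. intros. rewrite hg_0; auto. simpl; ring.
  - rewrite expect_S. destruct k.
    + apply rsum_ext. intros a Ha. simpl nth. rewrite expect_const by auto. rewrite Hr, hg_0; auto. simpl. ring.
    + apply rsum_ext. intros a Ha. simpl nth. rewrite expect_scal. rewrite marg by lia. rewrite hg_S. ring.
Qed.

Lemma Tpair j : forall v k N D g, (j < k)%nat -> (k <= N)%nat ->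
  expect n v A N (fun x => D (nth j x 0%nat) (nth (S j) x 0%nat) * g (nth k x 0%nat)) =
  rsum n (fun a => mu n A v j a * rsum n (fun b => A a b * D a b * hg n A (k - S j) g b)).
Proof. induction j; intros v k N D g Hjk HkN; destruct k as [|k]; try lia; destruct N as [|N]; try lia.
  - rewrite expect_S. apply rsum_ext. intros a Ha. simpl nth. rewrite (M0F N k (A a) (D a) g) by lia.
    unfold mu. simpl lpow. rewrite rsum_delta' by auto. replace (S k - 1)%nat with k by lia.
    try (f_equal; apply rsum_ext; intros; ring).
  - rewrite expect_S. simpl nth. 
    rewrite (rsum_ext _ _ (fun a => v a * rsum n (fun e => mu n A (A a) j e *
         rsum n (fun b => A e b * D e b * hg n A (k - S j) g b)))).
    2:{ intros a Ha. rewrite IHj by lia. auto. }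
    unfold mu. simpl lpow. 
    rewrite (rsum_ext _ _ (fun a => rsum n (fun e => v a * rsum n (fun i => A a i * lpow n A j i e) *
         rsum n (fun b => A e b * D e b * hg n A (k - S j) g b)))).
    2:{ intros. rewrite <- rsum_scal. apply rsum_ext; intros; ring. }
    rewrite rsum_comm. apply rsum_ext. intros e He. rewrite <- rsum_scal_r. auto.
Qed.


Lemma C0 (D : nat -> nat -> R) (HD : forall a, (a < n)%nat -> rsum n (fun b => A a b * D a b) = 0) N :
  forall m v F, (m < N)%nat ->
  expect n v A N (fun s => F (nth 0 s 0%nat) * D (nth m s 0%nat) (nth (S m) s 0%nat)) = 0.
Proof. induction N; intros m v F Hm; [lia|]. rewrite expect_S. rewrite <- (rsum_0 n). apply rsum_ext.
  intros a Ha. destruct m.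
  - simpl nth. rewrite expect_scal. rewrite (marg N 0 (A a) (D a)) by lia.
    rewrite (rsum_ext _ _ (fun b => A a b * D a b)). rewrite HD; auto; ring.
    intros. rewrite hg_0; auto.
  - simpl nth. rewrite (IHN m (A a) (fun _ => F a)) by lia. ring.
Qed.

Lemma Cross (D : nat -> nat -> R) (HD : forall a, (a < n)%nat -> rsum n (fun b => A a b * D a b) = 0) j :
  forall j' v N, (j < j')%nat -> (j' < N)%nat ->
  expect n v A N (fun x => D (nth j x 0%nat) (nth (S j) x 0%nat) * D (nth j' x 0%nat) (nth (S j') x 0%nat)) = 0.
Proof. induction j; intros j' v N H1 H2; destruct j' as [|j']; try lia; destruct N as [|N]; try lia;
  rewrite expect_S; rewrite <- (rsum_0 n); apply rsum_ext; intros a Ha; simpl nth.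
  - rewrite (C0 D HD N j' (A a) (D a)) by lia. ring.
  - rewrite IHj by lia. ring.
Qed.

Lemma S2 (D : nat -> nat -> R) (HD : forall a, (a < n)%nat -> rsum n (fun b => A a b * D a b) = 0)
  B (HB : forall a b, (a < n)%nat -> (b < n)%nat -> Rabs (D a b) <= B) v (Hv : is_distribution n v) k N :
  (k <= N)%nat ->
  expect n v A N (fun x => Rsqr (rsum k (fun j => D (nth j x 0%nat) (nth (S j) x 0%nat)))) <= INR k * Rsqr B.
Proof. destruct Hv as [Hv0 Hv1]. induction k; intros Hk.
  - simpl rsum. rewrite (expect_ext _ _ _ _ _ (fun _ => 0)). rewrite expect_const; auto. simpl. lra.
    intros. unfold Rsqr; ring.
  - simpl rsum. set (Sk := fun x => rsum k (fun j => D (nth j x 0%nat) (nth (S j) x 0%nat))).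
    set (dk := fun x : list nat => D (nth k x 0%nat) (nth (S k) x 0%nat)).
    rewrite (expect_ext _ _ _ _ _ (fun x => Rsqr (Sk x) + (2 * rsum k (fun j => D (nth j x 0%nat) (nth (S j) x 0%nat) * dk x) + Rsqr (dk x)))).
    2:{ intros x. rewrite rsum_scal_r. unfold Sk, dk, Rsqr. ring. }
    rewrite !expect_plus, expect_scal, expect_rsum.
    rewrite (rsum_ext _ _ (fun _ => 0)). rewrite rsum_0.
    2:{ intros j Hj. unfold dk. apply Cross; auto; lia. }
    assert (expect n v A N (fun x => Rsqr (dk x)) <= expect n v A N (fun _ => Rsqr B)).
    { apply expect_mono; auto. intros x Hx. unfold dk. assert (0 <= B).
      { specialize (HB 0%nat 0%nat Hn Hn). pose proof (Rabs_pos (D 0%nat 0%nat)). lra. }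
      apply Rsqr_le_abs_1. rewrite (Rabs_pos_eq B); auto. }
    rewrite expect_const in H by auto. rewrite Hv1 in H. rewrite S_INR.
    assert (expect n v A N (fun x => Rsqr (Sk x)) <= INR k * Rsqr B) by (apply IHk; lia). lra.
Qed.
End M.

Lemma pow_decr (r : R) (a b : nat) : 0 <= r <= 1 -> (a <= b)%nat -> r ^ b <= r ^ a.
Proof. intros Hr Hab. replace b with (a + (b - a))%nat by lia. rewrite pow_add.
  assert (0 <= r ^ a) by (apply pow_le; lra). assert (r ^ (b - a) <= 1).
  { rewrite <- (pow1 (b - a)). apply pow_incr. lra. } nra. Qed.

Lemma bernoulli (x : R) (m : nat) : 0 <= x <= 1 -> 1 - INR m * x <= (1 - x) ^ m.
Proof. intros Hx. induction m. simpl; lra. rewrite S_INR. simpl.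
  assert (0 <= x * INR m * x) by (apply Rmult_le_pos; [apply Rmult_le_pos|]; try lra; apply pos_INR). nra. Qed.

Lemma fin_min m (f : nat -> R) : (forall i, (i < m)%nat -> 0 < f i) ->
  exists d, 0 < d /\ forall i, (i < m)%nat -> d <= f i.
Proof. induction m; intros H. exists 1; split; [lra| intros; lia].
  destruct IHm as [d [Hd Hd']]. intros; apply H; lia.
  exists (Rmin d (f m)). split. apply Rmin_pos; auto; apply H; lia.
  intros i Hi. destruct (Nat.eq_dec i m). subst; apply Rmin_r.
  eapply Rle_trans; [apply Rmin_l| apply Hd'; lia]. Qed.

Lemma fin_min2 m1 m2 (f : nat -> nat -> R) : (forall i j, (i < m1)%nat -> (j < m2)%nat -> 0 < f i j) ->
  exists d, 0 < d /\ forall i j, (i < m1)%nat -> (j < m2)%nat -> d <= f i j.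
Proof. induction m1; intros H. exists 1; split; [lra| intros; lia].
  destruct IHm1 as [d [Hd Hd']]. intros; apply H; lia.
  destruct (fin_min m2 (f m1)) as [e [He He']]. intros; apply H; lia.
  exists (Rmin d e). split. apply Rmin_pos; auto.
  intros i j Hi Hj. destruct (Nat.eq_dec i m1). subst. eapply Rle_trans; [apply Rmin_r| apply He'; lia].
  eapply Rle_trans; [apply Rmin_l| apply Hd'; lia]. Qed.

Definition osc n (f : nat -> R) d := forall i i', (i < n)%nat -> (i' < n)%nat -> f i - f i' <= d.

Section G.
Variable n : nat.
Variable A : nat -> nat -> R.
Hypothesis HA : stoch n A.
Hypothesis Hn : (0 < n)%nat.

Lemma lpow_stoch m : stoch n (lpow n A m).
Proof. destruct HA as [H0 H1]. induction m; split; simpl.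
  - intros; destruct (Nat.eqb i j); lra.
  - intros. apply rsum_delta1; auto.
  - intros. apply rsum_nonneg. intros. apply Rmult_le_pos; [apply H0| apply IHm]; auto.
  - intros i Hi. rewrite rsum_comm. rewrite (rsum_ext _ _ (fun k => A i k * 1)).
    rewrite (rsum_ext _ _ (fun k => A i k)). apply H1; auto. intros; ring.
    intros k Hk. rewrite rsum_scal. destruct IHm as [_ Hm]. rewrite Hm; auto.
Qed.

Lemma lpow_add a b i j : (i < n)%nat -> lpow n A (a + b) i j = rsum n (fun m => lpow n A a i m * lpow n A b m j).
Proof. revert i. induction a; intros i Hi.
  - simpl. symmetry. apply (rsum_delta n i (fun m => lpow n A b m j)); auto.
  - simpl. rewrite (rsum_ext _ _ (fun k => rsum n (fun m => A i k * lpow n A a k m * lpow n A b m j))).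
    rewrite rsum_comm. apply rsum_ext. intros. rewrite <- rsum_scal_r. auto.
    intros k Hk. rewrite IHa by auto. rewrite <- rsum_scal. apply rsum_ext; intros; ring.
Qed.

Lemma lpow_mpow m i j : (i < n)%nat -> (j < n)%nat -> lpow n A m i j = mpow n A m i j.
Proof. revert i j. induction m; intros i j Hi Hj. reflexivity.
  replace (S m) with (m + 1)%nat by lia. rewrite lpow_add by auto. simpl mpow.
  replace (m + 1)%nat with (S m) by lia. simpl mpow. apply rsum_ext. intros k Hk.
  rewrite IHm by auto. f_equal. simpl. rewrite rsum_delta'; auto. Qed.

Lemma lpow_le1 m i j : (i < n)%nat -> (j < n)%nat -> 0 <= lpow n A m i j <= 1.
Proof. intros. destruct (lpow_stoch m) as [S0 S1]. split. apply S0; auto.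
  rewrite <- (S1 i); auto. apply (rsum_term_le n (fun j => lpow n A m i j)); auto. Qed.

Variable pi : nat -> R.
Hypothesis Hpi : is_stationary n A pi.

Lemma pi_lpow k j : (j < n)%nat -> rsum n (fun i => pi i * lpow n A k i j) = pi j.
Proof. destruct Hpi as [_ Hs]. revert j. induction k; intros j Hj.
  - simpl. apply rsum_delta'; auto.
  - simpl. rewrite (rsum_ext _ _ (fun i => rsum n (fun m => pi i * A i m * lpow n A k m j))).
    rewrite rsum_comm. rewrite (rsum_ext _ _ (fun m => pi m * lpow n A k m j)). apply IHk; auto.
    intros m Hm. rewrite rsum_scal_r. rewrite Hs; auto.
    intros. rewrite <- rsum_scal. apply rsum_ext; intros; ring.
Qed.

Lemma contraction (Mx : nat -> nat -> R) (d0 : R) (f : nat -> R) (d : R) :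
  stoch n Mx -> 0 < d0 -> (forall i m, (i < n)%nat -> (m < n)%nat -> d0 <= Mx i m) ->
  osc n f d -> osc n (fun i => rsum n (fun m => Mx i m * f m)) ((1 - INR n * d0 / 2) * d).
Proof. intros [_ HM1] Hd0 HM Hf. set (r := 1 - INR n * d0 / 2).
  assert (Hnd : INR n * d0 <= 1).
  { rewrite <- (HM1 0%nat Hn). rewrite <- rsum_const. apply rsum_le. intros; apply HM; auto. }
  assert (Hr : 0 < r) by (unfold r; lra).
  set (B := fun i m => Mx i m - d0 / 2).
  assert (HB : forall i, (i < n)%nat -> rsum n (fun m => B i m) = r).
  { intros i Hi. unfold B. rewrite rsum_minus, HM1, rsum_const by auto. unfold r; lra. }
  assert (HB0 : forall i m, (i < n)%nat -> (m < n)%nat -> 0 <= B i m).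
  { intros. unfold B. specialize (HM i m H H0). lra. }
  intros i i' Hi Hi'.
  assert (E : forall i, (i < n)%nat -> rsum n (fun m => Mx i m * f m) = d0 / 2 * rsum n f + rsum n (fun m => B i m * f m)).
  { intros. rewrite <- rsum_scal, <- rsum_plus. apply rsum_ext. intros. unfold B; ring. }
  rewrite !E by auto.
  assert (X : r * (rsum n (fun m => B i m * f m) - rsum n (fun m => B i' m * f m)) =
    rsum n (fun m => rsum n (fun m' => B i m * B i' m' * (f m - f m')))).
  { symmetry.
    rewrite (rsum_ext _ _ (fun m => B i m * f m * rsum n (fun m' => B i' m') - rsum n (fun m' => B i m * (B i' m' * f m'))))
      by (intros; rewrite <- rsum_scal, <- rsum_minus; apply rsum_ext; intros; ring).
    rewrite rsum_minus.
    rewrite (rsum_ext _ (fun m => B i m * f m * rsum n (fun m' => B i' m')) (fun m => r * (B i m * f m)))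
      by (intros; rewrite HB; auto; ring).
    rewrite rsum_scal.
    rewrite (rsum_comm n n (fun m m' => B i m * (B i' m' * f m'))).
    rewrite (rsum_ext _ (fun m' => rsum n (fun m => B i m * (B i' m' * f m'))) (fun m' => r * (B i' m' * f m')))
      by (intros; rewrite rsum_scal_r; rewrite HB; auto; ring).
    rewrite rsum_scal. ring. }
  assert (Y : rsum n (fun m => rsum n (fun m' => B i m * B i' m' * (f m - f m'))) <= r * r * d).
  { apply Rle_trans with (rsum n (fun m => rsum n (fun m' => B i m * B i' m' * d))).
    apply rsum_le; intros; apply rsum_le; intros. apply Rmult_le_compat_l.
    apply Rmult_le_pos; apply HB0; auto. apply Hf; auto.
    rewrite (rsum_ext _ _ (fun m => r * d * B i m)). rewrite rsum_scal, HB; auto. lra.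
    intros m Hm. rewrite (rsum_ext _ _ (fun m' => B i m * d * B i' m')) by (intros; ring).
    rewrite rsum_scal, HB; auto. ring. }
  assert (r * (rsum n (fun m => B i m * f m) - rsum n (fun m => B i' m * f m)) <= r * (r * d)) by lra.
  apply Rmult_le_reg_l in H; auto. fold r. lra.
Qed.

Hypothesis Hreg : regular n A.

Lemma geo : exists C rho, 0 <= C /\ 0 < rho < 1 /\
  forall k i j, (i < n)%nat -> (j < n)%nat -> Rabs (lpow n A k i j - pi j) <= C * rho ^ k.
Proof.
  destruct Hreg as [M HM].
  destruct (fin_min2 n n (lpow n A M)) as [dl [Hdl Hdl']].
  { intros. rewrite lpow_mpow; auto. }
  set (M1 := S M).
  assert (HM1 : forall i j, (i < n)%nat -> (j < n)%nat -> dl <= lpow n A M1 i j).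
  { intros i j Hi Hj. unfold M1. simpl. destruct HA as [HA0 HA1].
    apply Rle_trans with (rsum n (fun k => A i k * dl)).
    rewrite rsum_scal_r, HA1; auto; lra.
    apply rsum_le. intros. apply Rmult_le_compat_l; auto. }
  set (r := 1 - INR n * dl / 2).
  assert (Hnd : INR n * dl <= 1).
  { destruct (lpow_stoch M1) as [_ S1]. rewrite <- (S1 0%nat Hn). rewrite <- rsum_const. apply rsum_le. intros; apply HM1; auto. }
  assert (Hnpos : 1 <= INR n) by (apply (le_INR 1); lia).
  assert (Hr : 1/2 <= r < 1). { unfold r. split. lra. assert (0 < INR n * dl) by nra. lra. }
  assert (Col : forall j, (j < n)%nat -> forall q k, (q * M1 <= k)%nat -> osc n (fun i => lpow n A k i j) (r ^ q)).
  { intros j Hj q. induction q; intros k Hk.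
    - intros i i' Hi Hi'. simpl. pose proof (lpow_le1 k i j Hi Hj). pose proof (lpow_le1 k i' j Hi' Hj). lra.
    - replace k with (M1 + (k - M1))%nat by (simpl in Hk; lia).
      intros i i' Hi Hi'. rewrite !lpow_add by auto.
      apply (contraction (lpow n A M1) dl (fun m => lpow n A (k - M1) m j) (r ^ q)); auto.
      apply lpow_stoch. apply IHq. simpl in Hk; lia. }
  set (rho := 1 - (1 - r) / (2 * INR M1)).
  assert (HM1pos : 1 <= INR M1) by (apply (le_INR 1); unfold M1; lia).
  assert (Hrho : 0 < rho < 1).
  { unfold rho. split. 
    assert ((1 - r) / (2 * INR M1) <= 1/4). { apply Rmult_le_reg_r with (2 * INR M1). lra. 
      unfold Rdiv. rewrite Rmult_assoc, Rinv_l by lra. lra. } lra.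
    assert (0 < (1 - r) / (2 * INR M1)). { apply Rdiv_lt_0_compat; lra. } lra. }
  assert (Hrr : r <= rho ^ M1).
  { unfold rho. eapply Rle_trans; [| apply bernoulli].
    replace (INR M1 * ((1 - r) / (2 * INR M1))) with ((1 - r) / 2) by (field; lra). lra.
    split. left; apply Rdiv_lt_0_compat; lra. 
    apply Rmult_le_reg_r with (2 * INR M1). lra. unfold Rdiv. rewrite Rmult_assoc, Rinv_l by lra. lra. }
  exists (/ rho ^ M1), rho. split. left; apply Rinv_0_lt_compat, pow_lt; lra. split; auto.
  intros k i j Hi Hj. set (q := (k / M1)%nat).
  assert (Hq1 : (q * M1 <= k)%nat) by (unfold q; rewrite Nat.mul_comm; apply Nat.Div0.mul_div_le).
  assert (Hq2 : (k < M1 * S q)%nat) by (unfold q; apply Nat.mul_succ_div_gt; unfold M1; lia).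
  assert (B1 : Rabs (lpow n A k i j - pi j) <= r ^ q).
  { destruct Hpi as [[Hp0 Hp1] _].
    rewrite <- (pi_lpow k j Hj). 
    replace (lpow n A k i j - rsum n (fun i0 => pi i0 * lpow n A k i0 j)) with
      (rsum n (fun i0 => pi i0 * (lpow n A k i j - lpow n A k i0 j))).
    2:{ rewrite (rsum_ext _ _ (fun i0 => pi i0 * lpow n A k i j - pi i0 * lpow n A k i0 j)) by (intros; ring).
        rewrite rsum_minus, rsum_scal_r, Hp1. ring. }
    eapply Rle_trans; [apply rsum_abs|].
    apply Rle_trans with (rsum n (fun i0 => pi i0 * r ^ q)).
    apply rsum_le. intros i0 Hi0. rewrite Rabs_mult, (Rabs_pos_eq (pi i0)) by auto.
    apply Rmult_le_compat_l; auto. apply Rabs_le. pose proof (Col j Hj q k Hq1 i i0 Hi Hi0).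
    pose proof (Col j Hj q k Hq1 i0 i Hi0 Hi). lra.
    rewrite rsum_scal_r, Hp1. lra. }
  eapply Rle_trans; [apply B1|].
  assert (r ^ q <= rho ^ (M1 * q)).
  { rewrite pow_mult. apply pow_incr. lra. }
  assert (rho ^ (M1 * q) * rho ^ M1 <= rho ^ k).
  { rewrite <- pow_add. apply pow_decr. lra. lia. }
  assert (0 < rho ^ M1) by (apply pow_lt; lra).
  apply Rle_trans with (rho ^ (M1 * q)); auto.
  apply Rmult_le_reg_l with (rho ^ M1); auto. rewrite <- Rmult_assoc, Rinv_r by lra. lra.
Qed.
End G.

Lemma rsum_sum_f K u : rsum (S K) u = sum_f_R0 u K.
Proof. induction K. simpl; lra. simpl rsum. simpl sum_f_R0. rewrite <- IHK. simpl. lra. Qed.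

Lemma series_bound (v : nat -> R) B rho : 0 <= rho < 1 -> (forall m, Rabs (v m) <= B * rho ^ m) ->
  ex_series v /\ Rabs (Series v) <= B / (1 - rho).
Proof. intros Hr Hv.
  assert (Hg : is_series (fun m => B * rho ^ m) (B / (1 - rho))).
  { apply (is_series_scal_l B (fun m => rho ^ m)). apply is_series_geom. rewrite Rabs_pos_eq; lra. }
  assert (Ha : ex_series (fun m => Rabs (v m))).
  { apply (@ex_series_le R_AbsRing R_CompleteNormedModule _ (fun m => B * rho ^ m)). intros m. 
    change (norm (Rabs (v m))) with (Rabs (Rabs (v m))). rewrite Rabs_Rabsolu. auto.
    exists (B / (1 - rho)); auto. }
  split. apply ex_series_Rabs; auto.
  eapply Rle_trans. apply Series_Rabs; auto.
  rewrite <- (is_series_unique _ _ Hg). apply Series_le. intros; split; auto. apply Rabs_pos.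
  exists (B / (1 - rho)); auto. Qed.

Lemma series_tail (u : nat -> R) B rho : 0 <= rho < 1 -> (forall m, Rabs (u m) <= B * rho ^ m) ->
  forall K, Rabs (Series u - rsum K u) <= B * rho ^ K / (1 - rho).
Proof. intros Hr Hu K.
  destruct (series_bound u B rho Hr Hu) as [Hex _].
  assert (E : Series u = rsum K u + Series (fun k => u (K + k)%nat)).
  { destruct K. simpl. rewrite Rplus_0_l. apply Series_ext. auto.
    rewrite (Series_incr_n u (S K)) by (auto; lia). simpl pred. rewrite rsum_sum_f. auto. }
  rewrite E. replace (rsum K u + Series (fun k => u (K + k)%nat) - rsum K u) with (Series (fun k => u (K + k)%nat)) by ring.
  apply series_bound; auto. intros m. rewrite Rmult_assoc, <- pow_add. auto. Qed.

Lemma zero_of_geo (X K rho : R) : 0 < rho < 1 -> (forall k, Rabs X <= K * rho ^ k) -> X = 0.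
Proof. intros Hr H. destruct (Req_dec X 0); auto. exfalso.
  assert (HX : 0 < Rabs X) by (apply Rabs_pos_lt; auto).
  assert (HK : 0 <= K). { specialize (H 0%nat). simpl in H. lra. }
  destruct (pow_lt_1_zero rho) with (y := Rabs X / (K + 1)) as [N HN].
  rewrite Rabs_pos_eq; lra. apply Rdiv_lt_0_compat; lra.
  specialize (HN N (Nat.le_refl N)). rewrite Rabs_pos_eq in HN by (apply pow_le; lra).
  specialize (H N). assert (K * rho ^ N <= K * (Rabs X / (K + 1))).
  { apply Rmult_le_compat_l; lra. }
  assert (K * (Rabs X / (K + 1)) < Rabs X).
  { apply Rmult_lt_reg_r with (K + 1). lra. replace (K * (Rabs X / (K + 1)) * (K + 1)) with (K * Rabs X) by (field; lra). nra. }
  lra. Qed.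

Definition kap n (pi g : nat -> R) := rsum n (fun e => pi e * g e).
Definition wv n P pi g m b := hg n P m g b - kap n pi g.
Definition Wv n P pi g b := Series (fun m => wv n P pi g m b).

Section Id.
Variable n : nat.
Variable P : nat -> nat -> R.
Variable pi : nat -> R.
Variables C rho : R.
Hypothesis HP : stoch n P.
Hypothesis Hn : (0 < n)%nat.
Hypothesis Hpi : is_stationary n P pi.
Hypothesis Hrho : 0 < rho < 1.
Hypothesis HC : 0 <= C.
Hypothesis Hgeo : forall k i j, (i < n)%nat -> (j < n)%nat -> Rabs (lpow n P k i j - pi j) <= C * rho ^ k.

Definition absum (g : nat -> R) := rsum n (fun e => Rabs (g e)).

Lemma absum_pos g : 0 <= absum g.
Proof. apply rsum_nonneg; intros; apply Rabs_pos. Qed.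

Lemma w_bound g m b : (b < n)%nat -> Rabs (wv n P pi g m b) <= C * absum g * rho ^ m.
Proof. intros Hb. unfold wv, hg, kap. rewrite <- rsum_minus.
  eapply Rle_trans; [apply rsum_abs|]. unfold absum. rewrite <- rsum_scal, <- rsum_scal_r.
  apply rsum_le. intros e He. replace (lpow n P m b e * g e - pi e * g e) with ((lpow n P m b e - pi e) * g e) by ring.
  rewrite Rabs_mult. specialize (Hgeo m b e Hb He). pose proof (Rabs_pos (g e)).
  replace (C * Rabs (g e) * rho ^ m) with (C * rho ^ m * Rabs (g e)) by ring.
  apply Rmult_le_compat_r; auto. Qed.

Lemma W_tail g b K : (b < n)%nat -> Rabs (Wv n P pi g b - rsum K (fun m => wv n P pi g m b)) <= C * absum g * rho ^ K / (1 - rho).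
Proof. intros Hb. apply series_tail. lra. intros; apply w_bound; auto. Qed.

Lemma W_bound g b : (b < n)%nat -> Rabs (Wv n P pi g b) <= C * absum g / (1 - rho).
Proof. intros Hb. pose proof (W_tail g b 0 Hb). simpl in H. rewrite Rminus_0_r, Rmult_1_r in H. auto. Qed.

Lemma identity (Q : nat -> nat -> R) (piQ : nat -> R) g : stoch n Q -> is_stationary n Q piQ ->
  rsum n (fun i => piQ i * g i) - kap n pi g = rsum n (fun a => piQ a * rsum n (fun b => (Q a b - P a b) * Wv n P pi g b)).
Proof. intros [HQ0 HQ1] [[Hq0 Hq1] Hqs]. destruct HP as [HP0 HP1].
  set (X := rsum n (fun i => piQ i * g i) - kap n pi g - rsum n (fun a => piQ a * rsum n (fun b => (Q a b - P a b) * Wv n P pi g b))).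
  enough (X = 0) by (unfold X in H; lra).
  set (Cw := C * absum g).
  assert (HCw : 0 <= Cw) by (apply Rmult_le_pos; auto; apply absum_pos).
  apply (zero_of_geo X (Cw + INR n * INR n * (Cw / (1 - rho))) rho Hrho). intros K.
  set (u := fun m => rsum n (fun a => piQ a * hg n P m g a)).
  assert (Step : forall m, rsum n (fun a => piQ a * rsum n (fun b => (Q a b - P a b) * wv n P pi g m b)) = u m - u (S m)).
  { intros m. unfold u, wv.
    transitivity (rsum n (fun a => rsum n (fun b => piQ a * Q a b * hg n P m g b) - piQ a * hg n P (S m) g a)).
    { apply rsum_ext. intros a Ha. rewrite hg_S by auto.
      rewrite (rsum_ext _ _ (fun b => (Q a b * hg n P m g b - P a b * hg n P m g b) - kap n pi g * (Q a b - P a b))) by (intros; ring).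
      rewrite !rsum_minus, rsum_scal, rsum_minus, HQ1, HP1 by auto.
      rewrite (rsum_ext _ (fun b => piQ a * Q a b * hg n P m g b) (fun b => piQ a * (Q a b * hg n P m g b))) by (intros; ring).
      rewrite rsum_scal. ring. }
    rewrite rsum_minus, rsum_comm. f_equal. apply rsum_ext. intros b Hb. rewrite rsum_scal_r. rewrite Hqs; auto. }
  assert (Tel : rsum K (fun m => rsum n (fun a => piQ a * rsum n (fun b => (Q a b - P a b) * wv n P pi g m b))) = u 0%nat - u K).
  { rewrite (rsum_ext _ _ (fun m => u m - u (S m))) by (intros; apply Step). apply rsum_telescope. }
  assert (U0 : u 0%nat = rsum n (fun i => piQ i * g i)).
  { unfold u. apply rsum_ext. intros. rewrite hg_0; auto. }
  assert (R : rsum K (fun m => rsum n (fun a => piQ a * rsum n (fun b => (Q a b - P a b) * wv n P pi g m b))) =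
     rsum n (fun a => piQ a * rsum n (fun b => (Q a b - P a b) * rsum K (fun m => wv n P pi g m b)))).
  { rewrite rsum_comm. apply rsum_ext. intros a Ha. rewrite rsum_scal. f_equal. rewrite rsum_comm.
    apply rsum_ext. intros b Hb. rewrite rsum_scal. auto. }
  assert (R2 : rsum n (fun a => piQ a * rsum n (fun b => (Q a b - P a b) * (rsum K (fun m => wv n P pi g m b) - Wv n P pi g b))) =
     rsum n (fun a => piQ a * rsum n (fun b => (Q a b - P a b) * rsum K (fun m => wv n P pi g m b))) -
     rsum n (fun a => piQ a * rsum n (fun b => (Q a b - P a b) * Wv n P pi g b))).
  { rewrite <- rsum_minus. apply rsum_ext. intros. rewrite <- Rmult_minus_distr_l, <- rsum_minus. f_equal. apply rsum_ext; intros; ring. }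
  assert (EX : X = (u K - kap n pi g) + rsum n (fun a => piQ a * rsum n (fun b => (Q a b - P a b) * (rsum K (fun m => wv n P pi g m b) - Wv n P pi g b)))).
  { rewrite R2, <- R, Tel, U0. unfold X. ring. }
  rewrite EX. eapply Rle_trans; [apply Rabs_triang|].
  replace ((Cw + INR n * INR n * (Cw / (1 - rho))) * rho ^ K) with (Cw * rho ^ K + INR n * (INR n * (Cw * rho ^ K / (1 - rho)))) by (field; lra).
  apply Rplus_le_compat.
  - replace (u K - kap n pi g) with (rsum n (fun a => piQ a * wv n P pi g K a)).
    2:{ unfold u, wv. rewrite (rsum_ext _ _ (fun a => piQ a * hg n P K g a - kap n pi g * piQ a)) by (intros; ring).
        rewrite rsum_minus, rsum_scal, Hq1. ring. }
    eapply Rle_trans; [apply rsum_abs|]. apply Rle_trans with (rsum n (fun a => piQ a * (Cw * rho ^ K))).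
    apply rsum_le. intros a Ha. rewrite Rabs_mult, (Rabs_pos_eq (piQ a)) by auto. apply Rmult_le_compat_l; auto. apply w_bound; auto.
    rewrite rsum_scal_r, Hq1. lra.
  - eapply Rle_trans; [apply rsum_abs|].
    apply Rle_trans with (rsum n (fun a => rsum n (fun b => Cw * rho ^ K / (1 - rho)))).
    apply rsum_le. intros a Ha. rewrite Rabs_mult, (Rabs_pos_eq (piQ a)) by auto.
    assert (piQ a <= 1). { rewrite <- Hq1. apply rsum_term_le; auto. }
    eapply Rle_trans. apply Rmult_le_compat_r. apply Rabs_pos. apply H. rewrite Rmult_1_l.
    eapply Rle_trans; [apply rsum_abs|]. apply rsum_le. intros b Hb. rewrite Rabs_mult.
    assert (Rabs (Q a b - P a b) <= 1). { pose proof (HQ0 a b Ha Hb). pose proof (HP0 a b Ha Hb).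
      assert (Q a b <= 1) by (rewrite <- (HQ1 a Ha); apply (rsum_term_le n (fun j => Q a j)); auto).
      assert (P a b <= 1) by (rewrite <- (HP1 a Ha); apply (rsum_term_le n (fun j => P a j)); auto).
      apply Rabs_le; lra. }
    rewrite (Rabs_minus_sym (rsum K (fun m => wv n P pi g m b))).
    pose proof (W_tail g b K Hb). pose proof (Rabs_pos (Wv n P pi g b - rsum K (fun m => wv n P pi g m b))).
    apply Rle_trans with (1 * Rabs (Wv n P pi g b - rsum K (fun m => wv n P pi g m b))).
    apply Rmult_le_compat_r; auto. unfold Cw. lra.
    rewrite (rsum_ext _ _ (fun _ => INR n * (Cw * rho ^ K / (1 - rho)))) by (intros; apply rsum_const).
    rewrite rsum_const. lra.
Qed.
End Id.

Lemma est_expand c A dA N x l : estimator c A dA N x l = / INR N * rsum N (fun k => rsum (S k) (fun j =>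
   dA (nth j x 0%nat) (nth (S j) x 0%nat) l / A (nth j x 0%nat) (nth (S j) x 0%nat) * c (nth (S k) x 0%nat))).
Proof. unfold estimator, score. f_equal. apply rsum_ext. intros. rewrite Rmult_comm, <- rsum_scal_r. reflexivity. Qed.

Lemma rsum_shift m f : rsum (S m) f = f 0%nat + rsum m (fun i => f (S i)).
Proof. induction m. simpl; lra. simpl rsum in *. rewrite IHm. lra. Qed.

Lemma rsum_rev k f : rsum (S k) (fun j => f (k - j)%nat) = rsum (S k) f.
Proof. revert f. induction k; intros f. simpl. auto.
  rewrite (rsum_shift (S k) f). change (rsum (S (S k)) (fun j => f (S k - j)%nat)) with
    (rsum (S k) (fun j => f (S k - j)%nat) + f (S k - S k)%nat).
  replace (S k - S k)%nat with 0%nat by lia.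
  rewrite (rsum_ext _ (fun j => f (S k - j)%nat) (fun j => f (S (k - j))%nat)).
  rewrite (IHk (fun i => f (S i))). lra.
  intros j Hj. f_equal. lia. Qed.

Lemma rsum_S m f : rsum (S m) f = rsum m f + f m.
Proof. reflexivity. Qed.

Lemma geo_sum rho N : 0 <= rho < 1 -> rsum N (fun k => rho ^ k) <= / (1 - rho).
Proof. intros Hr. assert (E : rsum N (fun k => rho ^ k) * (1 - rho) = 1 - rho ^ N).
  { induction N. simpl; ring. simpl rsum. rewrite Rmult_plus_distr_r, IHN. simpl. ring. }
  assert (0 <= rho ^ N) by (apply pow_le; lra).
  apply Rmult_le_reg_r with (1 - rho). lra. rewrite E, Rinv_l by lra. lra. Qed.

Lemma geo_sum2 rho N : 0 <= rho < 1 -> rsum N (fun k => INR (S k) * rho ^ k) <= / (1 - rho) ^ 2.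
Proof. intros Hr. assert (E : rsum N (fun k => INR (S k) * rho ^ k) * (1 - rho) ^ 2 = 1 - INR (S N) * rho ^ N + INR N * rho ^ (S N)).
  { induction N. simpl; ring. rewrite rsum_S, Rmult_plus_distr_r, IHN. rewrite ?S_INR. simpl. ring. }
  assert (0 <= rho ^ N) by (apply pow_le; lra).
  assert (INR N * rho ^ (S N) <= INR (S N) * rho ^ N).
  { rewrite S_INR. simpl pow. pose proof (pos_INR N). assert (0 <= INR N * rho ^ N) by (apply Rmult_le_pos; lra). nra. }
  assert (0 < (1 - rho) ^ 2) by (apply pow_lt; lra).
  apply Rmult_le_reg_r with ((1 - rho) ^ 2). auto. rewrite E, Rinv_l by lra. lra. Qed.

Section Bias.
Variables n p : nat.
Variable P : nat -> nat -> R.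
Variable dP : nat -> nat -> nat -> R.
Variables pi pi0 c : nat -> R.
Variables C rho : R.
Hypothesis HP : stoch n P.
Hypothesis Hn : (0 < n)%nat.
Hypothesis Hpi : is_stationary n P pi.
Hypothesis Hpi0 : is_distribution n pi0.
Hypothesis Hrho : 0 < rho < 1.
Hypothesis HC : 0 <= C.
Hypothesis Hgeo : forall k i j, (i < n)%nat -> (j < n)%nat -> Rabs (lpow n P k i j - pi j) <= C * rho ^ k.
Hypothesis HdPz : forall a b l, (a < n)%nat -> (b < n)%nat -> (l < p)%nat -> P a b * (dP a b l / P a b) = dP a b l.
Hypothesis Hrow : forall a l, (a < n)%nat -> (l < p)%nat -> rsum n (fun b => dP a b l) = 0.

Definition gl l := rsum n (fun a => pi a * rsum n (fun b => dP a b l * Wv n P pi c b)).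
Definition Gt l j m := rsum n (fun a => mu n P pi0 j a * rsum n (fun b => dP a b l * wv n P pi c m b)).
Definition Gam l m := rsum n (fun a => pi a * rsum n (fun b => dP a b l * wv n P pi c m b)).
Definition Dl l := rsum n (fun a => rsum n (fun b => Rabs (dP a b l))).
Definition Cw := C * absum n c.

Lemma mu_bound j a : (a < n)%nat -> Rabs (mu n P pi0 j a - pi a) <= C * rho ^ j.
Proof. intros Ha. destruct Hpi0 as [H0 H1]. unfold mu.
  replace (rsum n (fun i => pi0 i * lpow n P j i a) - pi a) with (rsum n (fun i => pi0 i * (lpow n P j i a - pi a))).
  2:{ rewrite (rsum_ext _ _ (fun i => pi0 i * lpow n P j i a - pi a * pi0 i)) by (intros; ring). rewrite rsum_minus, rsum_scal, H1. ring. }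
  eapply Rle_trans; [apply rsum_abs|]. apply Rle_trans with (rsum n (fun i => pi0 i * (C * rho ^ j))).
  apply rsum_le. intros. rewrite Rabs_mult, (Rabs_pos_eq (pi0 k)) by auto. apply Rmult_le_compat_l; auto.
  rewrite rsum_scal_r, H1. lra. Qed.

Lemma Dl_pos l : 0 <= Dl l.
Proof. apply rsum_nonneg; intros; apply rsum_nonneg; intros; apply Rabs_pos. Qed.

Lemma Cw_pos : 0 <= Cw.
Proof. unfold Cw. apply Rmult_le_pos; auto. apply absum_pos. Qed.

Lemma inner_bound l a (B : nat -> R) K : (forall b, (b < n)%nat -> Rabs (B b) <= K) ->
  Rabs (rsum n (fun b => dP a b l * B b)) <= rsum n (fun b => Rabs (dP a b l)) * K.
Proof. intros H. eapply Rle_trans; [apply rsum_abs|]. rewrite <- rsum_scal_r. apply rsum_le.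
  intros b Hb. rewrite Rabs_mult. apply Rmult_le_compat_l. apply Rabs_pos. auto. Qed.

Lemma Gdiff l j m : Rabs (Gt l j m - Gam l m) <= C * Cw * Dl l * rho ^ (j + m).
Proof. unfold Gt, Gam. rewrite <- rsum_minus.
  rewrite (rsum_ext _ _ (fun a => (mu n P pi0 j a - pi a) * rsum n (fun b => dP a b l * wv n P pi c m b))) by (intros; ring).
  eapply Rle_trans; [apply rsum_abs|].
  apply Rle_trans with (rsum n (fun a => C * rho ^ j * (rsum n (fun b => Rabs (dP a b l)) * (Cw * rho ^ m)))).
  apply rsum_le. intros a Ha. rewrite Rabs_mult. apply Rmult_le_compat. apply Rabs_pos. apply Rabs_pos.
  apply mu_bound; auto. apply inner_bound. intros. apply w_bound; auto.
  rewrite (rsum_ext _ _ (fun a => C * Cw * rho ^ (j + m) * rsum n (fun b => Rabs (dP a b l)))).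
  rewrite rsum_scal. unfold Dl. right; ring.
  intros. rewrite pow_add. ring. Qed.

Lemma Gam_tail l K : Rabs (gl l - rsum K (fun m => Gam l m)) <= Dl l * (Cw * rho ^ K / (1 - rho)).
Proof. unfold gl, Gam. rewrite <- rsum_comm. rewrite <- rsum_minus.
  rewrite (rsum_ext _ _ (fun a => pi a * rsum n (fun b => dP a b l * (Wv n P pi c b - rsum K (fun m => wv n P pi c m b))))).
  2:{ intros a Ha. rewrite rsum_scal. rewrite <- Rmult_minus_distr_l. f_equal. rewrite rsum_comm. rewrite <- rsum_minus.
      apply rsum_ext. intros. rewrite rsum_scal. ring. }
  eapply Rle_trans; [apply rsum_abs|]. unfold Dl. rewrite <- rsum_scal_r. apply rsum_le. intros a Ha.
  rewrite Rabs_mult. destruct Hpi as [[H0 H1] _].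
  assert (pi a <= 1) by (rewrite <- H1; apply rsum_term_le; auto).
  rewrite Rabs_pos_eq by auto. 
  apply Rle_trans with (1 * (rsum n (fun b => Rabs (dP a b l)) * (Cw * rho ^ K / (1 - rho)))).
  apply Rmult_le_compat; auto. apply Rabs_pos. apply inner_bound. intros. apply W_tail; auto. lra. Qed.

Lemma E_formula l N : (l < p)%nat ->
  expect n pi0 P N (fun x => estimator c P dP N x l) = / INR N * rsum N (fun k => rsum (S k) (fun j => Gt l j (k - j)%nat)).
Proof. intros Hl. erewrite expect_ext; [| intros x; apply est_expand].
  rewrite expect_scal, expect_rsum. f_equal. apply rsum_ext. intros k Hk. rewrite expect_rsum.
  apply rsum_ext. intros j Hj.
  etransitivity. apply (Tpair n P HP Hn j pi0 (S k) N (fun a b => dP a b l / P a b) c); lia.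
  unfold Gt. apply rsum_ext. intros a Ha. f_equal. replace (S k - S j)%nat with (k - j)%nat by lia.
  transitivity (rsum n (fun b => dP a b l * hg n P (k - j) c b)).
  apply rsum_ext. intros b Hb. cbv beta. rewrite HdPz; auto.
  unfold wv. rewrite (rsum_ext _ (fun b => dP a b l * (hg n P (k - j) c b - kap n pi c)) (fun b => dP a b l * hg n P (k - j) c b - kap n pi c * dP a b l)) by (intros; ring).
  rewrite rsum_minus, rsum_scal, Hrow; auto; ring. Qed.

Lemma bias l N : (l < p)%nat -> (1 <= N)%nat ->
  Rabs (expect n pi0 P N (fun x => estimator c P dP N x l) - gl l) <= (C * Cw * Dl l + Dl l * Cw) / (1 - rho) ^ 2 / INR N.
Proof. intros Hl HN. rewrite E_formula by auto.
  set (K1 := C * Cw * Dl l). set (K2 := Dl l * Cw / (1 - rho)).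
  assert (HK1 : 0 <= K1) by (unfold K1; apply Rmult_le_pos; [apply Rmult_le_pos; [auto|apply Cw_pos]|apply Dl_pos]).
  assert (HK2 : 0 <= K2) by (unfold K2; apply Rmult_le_pos; [apply Rmult_le_pos; [apply Dl_pos|apply Cw_pos]| left; apply Rinv_0_lt_compat; lra]).
  assert (Claim : forall k, Rabs (rsum (S k) (fun j => Gt l j (k - j)%nat) - gl l) <= INR (S k) * K1 * rho ^ k + K2 * rho ^ k).
  { intros k.
    replace (rsum (S k) (fun j => Gt l j (k - j)%nat) - gl l) with
      (rsum (S k) (fun j => Gt l j (k - j)%nat - Gam l (k - j)%nat) + (rsum (S k) (Gam l) - gl l))
      by (rewrite rsum_minus, <- (rsum_rev k (Gam l)); ring).
    eapply Rle_trans; [apply Rabs_triang|]. apply Rplus_le_compat.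
    - eapply Rle_trans; [apply rsum_abs|]. rewrite Rmult_assoc, <- rsum_const. apply rsum_le. intros j Hj.
      replace k with (j + (k - j))%nat at 3 by lia. apply Gdiff.
    - rewrite Rabs_minus_sym. eapply Rle_trans. apply (Gam_tail l (S k)). unfold K2.
      assert (rho ^ S k <= rho ^ k) by (apply pow_decr; lra || lia).
      assert (0 <= Dl l * Cw) by (apply Rmult_le_pos; [apply Dl_pos|apply Cw_pos]).
      unfold Rdiv. replace (Dl l * (Cw * rho ^ S k * / (1 - rho))) with (Dl l * Cw * / (1 - rho) * rho ^ S k) by ring.
      apply Rmult_le_compat_l; auto. }
  assert (HN' : 0 < INR N) by (apply lt_0_INR; lia).
  replace (/ INR N * rsum N (fun k => rsum (S k) (fun j => Gt l j (k - j)%nat)) - gl l) with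
    (/ INR N * rsum N (fun k => rsum (S k) (fun j => Gt l j (k - j)%nat) - gl l)).
  2:{ rewrite rsum_minus, rsum_const. field. lra. }
  rewrite Rabs_mult, Rabs_pos_eq by (left; apply Rinv_0_lt_compat; auto).
  apply Rle_trans with (/ INR N * ((K1 + Dl l * Cw) / (1 - rho)^2)); [| right; unfold Rdiv; ring].
  apply Rmult_le_compat_l. left; apply Rinv_0_lt_compat; auto.
  eapply Rle_trans; [apply rsum_abs|]. eapply Rle_trans. apply rsum_le. intros k _. apply Claim.
  rewrite rsum_plus. rewrite (rsum_ext _ _ (fun k => K1 * (INR (S k) * rho ^ k))) by (intros; ring).
  rewrite rsum_scal, rsum_scal. 
  pose proof (geo_sum2 rho N ltac:(lra)). pose proof (geo_sum rho N ltac:(lra)).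
  assert (0 < 1 - rho) by lra.
  replace ((K1 + Dl l * Cw) / (1 - rho) ^ 2) with (K1 * / (1 - rho) ^ 2 + K2 * / (1 - rho))
    by (unfold K1, K2; field; lra).
  apply Rplus_le_compat; apply Rmult_le_compat_l; auto. Qed.
End Bias.

Section Var.
Variables n p : nat.
Variable P : nat -> nat -> R.
Variable dP : nat -> nat -> nat -> R.
Variables pi0 c : nat -> R.
Hypothesis HP : stoch n P.
Hypothesis Hn : (0 < n)%nat.
Hypothesis Hpi0 : is_distribution n pi0.
Hypothesis HdPz : forall a b l, (a < n)%nat -> (b < n)%nat -> (l < p)%nat -> P a b * (dP a b l / P a b) = dP a b l.
Hypothesis Hrow : forall a l, (a < n)%nat -> (l < p)%nat -> rsum n (fun b => dP a b l) = 0.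

Definition Dmx := rsum p (fun l => rsum n (fun a => rsum n (fun b => Rabs (dP a b l / P a b)))).

Lemma Dmx_bound l a b : (l < p)%nat -> (a < n)%nat -> (b < n)%nat -> Rabs (dP a b l / P a b) <= Dmx.
Proof. intros. unfold Dmx.
  apply Rle_trans with (rsum n (fun a => rsum n (fun b => Rabs (dP a b l / P a b)))).
  apply Rle_trans with (rsum n (fun b => Rabs (dP a b l / P a b))).
  apply (rsum_term_le n (fun b => Rabs (dP a b l / P a b))); auto; intros; apply Rabs_pos.
  apply (rsum_term_le n (fun a => rsum n (fun b => Rabs (dP a b l / P a b)))); auto; intros; apply rsum_nonneg; intros; apply Rabs_pos.
  apply (rsum_term_le p (fun l => rsum n (fun a => rsum n (fun b => Rabs (dP a b l / P a b))))); auto.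
  intros; apply rsum_nonneg; intros; apply rsum_nonneg; intros; apply Rabs_pos. Qed.

Lemma c_bound e : (e < n)%nat -> Rabs (c e) <= absum n c.
Proof. intros. apply (rsum_term_le n (fun e => Rabs (c e))); auto; intros; apply Rabs_pos. Qed.

Lemma est_sq l N : (l < p)%nat -> (1 <= N)%nat ->
  expect n pi0 P N (fun x => Rsqr (estimator c P dP N x l)) <= Rsqr (absum n c) * Rsqr Dmx * INR N.
Proof. intros Hl HN. set (D := fun a b => dP a b l / P a b).
  set (Sc := fun k x => rsum (S k) (fun j => D (nth j x 0%nat) (nth (S j) x 0%nat))).
  assert (HN' : 0 < INR N) by (apply lt_0_INR; lia).
  assert (Pt : forall x, allin n x -> Rsqr (estimator c P dP N x l) <= / INR N * rsum N (fun k => Rsqr (absum n c) * Rsqr (Sc k x))).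
  { intros x Hx. change (estimator c P dP N x l) with (/ INR N * rsum N (fun k => c (nth (S k) x 0%nat) * Sc k x)).
    rewrite Rsqr_mult. apply Rle_trans with (Rsqr (/ INR N) * (INR N * rsum N (fun k => Rsqr (c (nth (S k) x 0%nat) * Sc k x)))).
    apply Rmult_le_compat_l. apply Rle_0_sqr. apply rsum_sq_le.
    replace (Rsqr (/ INR N) * (INR N * rsum N (fun k => Rsqr (c (nth (S k) x 0%nat) * Sc k x)))) with
      (/ INR N * rsum N (fun k => Rsqr (c (nth (S k) x 0%nat) * Sc k x))) by (unfold Rsqr; field; lra).
    apply Rmult_le_compat_l. left; apply Rinv_0_lt_compat; auto. apply rsum_le. intros k Hk.
    rewrite Rsqr_mult. apply Rmult_le_compat_r. apply Rle_0_sqr. apply Rsqr_le_abs_1.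
    rewrite (Rabs_pos_eq (absum n c)) by (apply absum_pos). apply c_bound. apply Hx. }
  eapply Rle_trans. apply (expect_mono n pi0 P N _ (fun x => / INR N * rsum N (fun k => Rsqr (absum n c) * Rsqr (Sc k x))) Hn HP); [apply Hpi0|apply Pt].
  rewrite expect_scal, expect_rsum.
  apply Rle_trans with (/ INR N * rsum N (fun k => Rsqr (absum n c) * (INR (S k) * Rsqr Dmx))).
  apply Rmult_le_compat_l. left; apply Rinv_0_lt_compat; auto. apply rsum_le. intros k Hk.
  rewrite expect_scal. apply Rmult_le_compat_l. apply Rle_0_sqr.
  apply (S2 n P HP Hn D). intros a Ha. unfold D. rewrite (rsum_ext _ _ (fun b => dP a b l)). apply Hrow; auto.
  intros; apply HdPz; auto. intros; unfold D; apply Dmx_bound; auto. auto. lia.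
  rewrite (rsum_ext _ _ (fun k => Rsqr (absum n c) * Rsqr Dmx * INR (S k))) by (intros; ring).
  rewrite rsum_scal.
  assert (rsum N (fun k => INR (S k)) <= INR N * INR N).
  { rewrite <- rsum_const. apply rsum_le. intros. apply le_INR. lia. }
  assert (0 <= Rsqr (absum n c) * Rsqr Dmx) by (apply Rmult_le_pos; apply Rle_0_sqr).
  apply Rle_trans with (/ INR N * (Rsqr (absum n c) * Rsqr Dmx * (INR N * INR N))).
  apply Rmult_le_compat_l. left; apply Rinv_0_lt_compat; auto. apply Rmult_le_compat_l; auto.
  right. field. lra. Qed.
End Var.

Lemma fin_delta1 m (Q : nat -> R -> Prop) : (forall i, (i < m)%nat -> exists d, 0 < d /\ forall h, h <> 0 -> Rabs h < d -> Q i h) ->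
  exists d, 0 < d /\ forall i h, (i < m)%nat -> h <> 0 -> Rabs h < d -> Q i h.
Proof. induction m; intros H. exists 1; split; [lra| intros; lia].
  destruct IHm as [d [Hd Hd']]. intros; apply H; lia.
  destruct (H m) as [e [He He']]. lia.
  exists (Rmin d e). split. apply Rmin_pos; auto.
  intros i h Hi Hh Hhd. destruct (Nat.eq_dec i m). subst. apply He'; auto. eapply Rlt_le_trans; [apply Hhd| apply Rmin_r].
  apply Hd'; auto. lia. eapply Rlt_le_trans; [apply Hhd| apply Rmin_l]. Qed.

Lemma fin_delta2 m (Q : nat -> nat -> R -> Prop) : (forall i j, (i < m)%nat -> (j < m)%nat -> exists d, 0 < d /\ forall h, h <> 0 -> Rabs h < d -> Q i j h) ->
  exists d, 0 < d /\ forall i j h, (i < m)%nat -> (j < m)%nat -> h <> 0 -> Rabs h < d -> Q i j h.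
Proof. intros H.
  assert (Y : forall i, (i < m)%nat -> exists e, 0 < e /\ forall h, h <> 0 -> Rabs h < e -> forall j, (j < m)%nat -> Q i j h).
  { intros i Hi. assert (X : exists e, 0 < e /\ forall j h, (j < m)%nat -> h <> 0 -> Rabs h < e -> Q i j h).
    { apply (fin_delta1 m (fun j h => Q i j h)). intros; apply H; auto. }
    destruct X as [e [He He']]. exists e. split; auto. }
  destruct (fin_delta1 m (fun i h => forall j, (j < m)%nat -> Q i j h) Y) as [d [Hd Hd']].
  exists d. split; auto. Qed.

Lemma rsum_div m f c : rsum m f / c = rsum m (fun k => f k / c).
Proof. unfold Rdiv. rewrite rsum_scal_r. auto. Qed.

Section Der.
Variable n : nat.
Variable Pt : R -> nat -> nat -> R.
Variable pit : R -> nat -> R.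
Variable d : nat -> nat -> R.
Variable c : nat -> R.
Variables C rho eps0 : R.
Hypothesis Hn : (0 < n)%nat.
Hypothesis Heps0 : 0 < eps0.
Hypothesis Ht : forall t, Rabs t < eps0 -> stoch n (Pt t) /\ is_stationary n (Pt t) (pit t).
Hypothesis Hrho : 0 < rho < 1.
Hypothesis HC : 0 <= C.
Hypothesis Hgeo : forall k i j, (i < n)%nat -> (j < n)%nat -> Rabs (lpow n (Pt 0) k i j - pit 0 j) <= C * rho ^ k.
Hypothesis Hd : forall a b, (a < n)%nat -> (b < n)%nat -> derivable_pt_lim (fun t => Pt t a b) 0 (d a b).

Definition ev (j : nat) := fun i : nat => if Nat.eqb i j then 1 else 0.

Lemma H0t : stoch n (Pt 0) /\ is_stationary n (Pt 0) (pit 0).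
Proof. apply Ht. rewrite Rabs_R0. auto. Qed.

Lemma pit_bounds t a : Rabs t < eps0 -> (a < n)%nat -> 0 <= pit t a <= 1.
Proof. intros H Ha. destruct (Ht t H) as [_ [[H0 H1] _]]. split; auto. rewrite <- H1. apply rsum_term_le; auto. Qed.

Lemma ident_c t : Rabs t < eps0 ->
  rsum n (fun i => c i * pit t i) - rsum n (fun i => c i * pit 0 i) =
  rsum n (fun a => pit t a * rsum n (fun b => (Pt t a b - Pt 0 a b) * Wv n (Pt 0) (pit 0) c b)).
Proof. intros H. destruct (Ht t H) as [HQ HQs]. destruct H0t as [HP HPs].
  rewrite <- (identity n (Pt 0) (pit 0) C rho HP Hrho HC Hgeo (Pt t) (pit t) c HQ HQs).
  unfold kap. f_equal; apply rsum_ext; intros; ring. Qed.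

Lemma ident_e t j : Rabs t < eps0 -> (j < n)%nat ->
  pit t j - pit 0 j =
  rsum n (fun a => pit t a * rsum n (fun b => (Pt t a b - Pt 0 a b) * Wv n (Pt 0) (pit 0) (ev j) b)).
Proof. intros H Hj. destruct (Ht t H) as [HQ HQs]. destruct H0t as [HP HPs].
  rewrite <- (identity n (Pt 0) (pit 0) C rho HP Hrho HC Hgeo (Pt t) (pit t) (ev j) HQ HQs).
  unfold kap, ev. rewrite !rsum_delta'; auto. Qed.

Theorem deriv_main : derivable_pt_lim (fun t => rsum n (fun i => c i * pit t i)) 0
   (rsum n (fun a => pit 0 a * rsum n (fun b => d a b * Wv n (Pt 0) (pit 0) c b))).
Proof.
  set (W := Wv n (Pt 0) (pit 0) c).
  set (We := fun a => Wv n (Pt 0) (pit 0) (ev a)).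
  set (Ma := fun a => rsum n (fun a' => rsum n (fun b => (Rabs (d a' b) + 1) * Rabs (We a b)))).
  set (L1 := rsum n (fun a => rsum n (fun b => Rabs (W b)))).
  set (L2 := rsum n (fun a => rsum n (fun b => Ma a * Rabs (d a b) * Rabs (W b)))).
  assert (HMa : forall a, 0 <= Ma a).
  { intros. apply rsum_nonneg; intros; apply rsum_nonneg; intros. apply Rmult_le_pos. pose proof (Rabs_pos (d k k0)); lra. apply Rabs_pos. }
  assert (HL1 : 0 <= L1) by (apply rsum_nonneg; intros; apply rsum_nonneg; intros; apply Rabs_pos).
  assert (HL2 : 0 <= L2).
  { apply rsum_nonneg; intros; apply rsum_nonneg; intros. apply Rmult_le_pos; [apply Rmult_le_pos|]; auto; apply Rabs_pos. }
  set (L := L1 + L2 + 1).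
  assert (HLpos : 0 < L) by (unfold L; lra).
  intros eps Heps.
  set (eta := Rmin 1 (eps / (2 * L))).
  assert (Heta : 0 < eta). { apply Rmin_pos. lra. apply Rdiv_lt_0_compat; lra. }
  destruct (fin_delta2 n (fun a b h => Rabs ((Pt h a b - Pt 0 a b) / h - d a b) < eta)) as [d1 [Hd1 Hd1']].
  { intros a b Ha Hb. destruct (Hd a b Ha Hb eta Heta) as [del Hdel]. exists del. split. apply cond_pos.
    intros h Hh Hhd. specialize (Hdel h Hh Hhd). rewrite Rplus_0_l in Hdel. auto. }
  assert (Hdpos : 0 < Rmin eps0 (Rmin d1 (eps / (2 * L)))).
  { apply Rmin_pos; auto. apply Rmin_pos; auto. apply Rdiv_lt_0_compat; lra. }
  exists (mkposreal _ Hdpos). intros h Hh Hhd. simpl in Hhd. rewrite Rplus_0_l.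
  assert (Hh0 : Rabs h < eps0) by (eapply Rlt_le_trans; [apply Hhd| apply Rmin_l]).
  assert (Hh1 : Rabs h < d1) by (eapply Rlt_le_trans; [apply Hhd|]; eapply Rle_trans; [apply Rmin_r| apply Rmin_l]).
  assert (Hh2 : Rabs h < eps / (2 * L)) by (eapply Rlt_le_trans; [apply Hhd|]; eapply Rle_trans; [apply Rmin_r| apply Rmin_r]).
  assert (Hq : forall a b, (a < n)%nat -> (b < n)%nat -> Rabs ((Pt h a b - Pt 0 a b) / h - d a b) < eta) by (intros; apply Hd1'; auto).
  assert (Hdiff : forall a b, (a < n)%nat -> (b < n)%nat -> Rabs (Pt h a b - Pt 0 a b) <= Rabs h * (Rabs (d a b) + 1)).
  { intros a b Ha Hb. replace (Pt h a b - Pt 0 a b) with (h * ((Pt h a b - Pt 0 a b) / h)) by (field; auto).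
    rewrite Rabs_mult. apply Rmult_le_compat_l. apply Rabs_pos.
    specialize (Hq a b Ha Hb). assert (eta <= 1) by apply Rmin_l.
    pose proof (Rabs_triang_inv ((Pt h a b - Pt 0 a b) / h) (d a b)). lra. }
  assert (Hpe : forall a, (a < n)%nat -> Rabs (pit h a - pit 0 a) <= Rabs h * Ma a).
  { intros a Ha. rewrite (ident_e h a Hh0 Ha). eapply Rle_trans; [apply rsum_abs|]. unfold Ma. rewrite <- rsum_scal.
    apply rsum_le. intros a' Ha'. rewrite Rabs_mult. destruct (pit_bounds h a' Hh0 Ha').
    rewrite (Rabs_pos_eq (pit h a')) by auto.
    apply Rle_trans with (1 * Rabs (rsum n (fun b => (Pt h a' b - Pt 0 a' b) * Wv n (Pt 0) (pit 0) (ev a) b))).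
    apply Rmult_le_compat_r; auto; apply Rabs_pos. rewrite Rmult_1_l.
    eapply Rle_trans; [apply rsum_abs|]. rewrite <- rsum_scal. apply rsum_le. intros b Hb.
    rewrite Rabs_mult. unfold We. rewrite <- Rmult_assoc. apply Rmult_le_compat_r. apply Rabs_pos. apply Hdiff; auto. }
  replace ((rsum n (fun i => c i * pit h i) - rsum n (fun i => c i * pit 0 i)) / h -
     rsum n (fun a => pit 0 a * rsum n (fun b => d a b * W b)))
   with (rsum n (fun a => rsum n (fun b => (pit h a * ((Pt h a b - Pt 0 a b) / h) - pit 0 a * d a b) * W b))).
  2:{ rewrite ident_c by auto. unfold W.
      replace (rsum n (fun a => pit h a * rsum n (fun b => (Pt h a b - Pt 0 a b) * Wv n (Pt 0) (pit 0) c b)) / h)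
        with (rsum n (fun a => rsum n (fun b => pit h a * ((Pt h a b - Pt 0 a b) / h) * Wv n (Pt 0) (pit 0) c b))).
      rewrite <- rsum_minus. apply rsum_ext. intros. rewrite <- rsum_scal, <- rsum_minus. apply rsum_ext; intros; ring.
      symmetry. rewrite rsum_div. apply rsum_ext. intros. rewrite <- rsum_scal, rsum_div. apply rsum_ext. intros. field. auto. }
  eapply Rle_lt_trans; [apply rsum_abs|].
  apply Rle_lt_trans with (rsum n (fun a => rsum n (fun b => (eta + Rabs h * Ma a * Rabs (d a b)) * Rabs (W b)))).
  { apply rsum_le. intros a Ha. eapply Rle_trans; [apply rsum_abs|]. apply rsum_le. intros b Hb.
    rewrite Rabs_mult. apply Rmult_le_compat_r. apply Rabs_pos.
    replace (pit h a * ((Pt h a b - Pt 0 a b) / h) - pit 0 a * d a b) with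
      (pit h a * ((Pt h a b - Pt 0 a b) / h - d a b) + (pit h a - pit 0 a) * d a b) by ring.
    eapply Rle_trans; [apply Rabs_triang|]. apply Rplus_le_compat.
    rewrite Rabs_mult. destruct (pit_bounds h a Hh0 Ha). rewrite Rabs_pos_eq by auto.
    specialize (Hq a b Ha Hb). apply Rle_trans with (1 * eta); [|lra]. apply Rmult_le_compat; auto; try lra. apply Rabs_pos.
    rewrite Rabs_mult. apply Rmult_le_compat_r. apply Rabs_pos. apply Hpe; auto. }
  rewrite (rsum_ext _ _ (fun a => eta * rsum n (fun b => Rabs (W b)) + Rabs h * rsum n (fun b => Ma a * Rabs (d a b) * Rabs (W b)))).
  2:{ intros. rewrite <- !rsum_scal, <- rsum_plus. apply rsum_ext; intros; ring. }
  rewrite rsum_plus, !rsum_scal. fold L1 L2.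
  assert (eta * L1 <= eps / 2).
  { apply Rle_trans with (eps / (2 * L) * L). apply Rmult_le_compat; auto; try lra. apply Rmin_r. unfold L; lra.
    right. field. lra. }
  assert (Rabs h * L2 < eps / 2).
  { apply Rle_lt_trans with (Rabs h * L). apply Rmult_le_compat_l. apply Rabs_pos. unfold L; lra.
    apply Rlt_le_trans with (eps / (2 * L) * L). apply Rmult_lt_compat_r; auto. right; field; lra. }
  lra.
Qed.
End Der.

Lemma deriv_rsum m (F : nat -> R -> R) (dd : nat -> R) x :
  (forall b, (b < m)%nat -> derivable_pt_lim (F b) x (dd b)) ->
  derivable_pt_lim (fun t => rsum m (fun b => F b t)) x (rsum m dd).
Proof. induction m; intros H. simpl. apply derivable_pt_lim_const.
  simpl. apply (derivable_pt_lim_plus (fun t => rsum m (fun b => F b t)) (F m)).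
  apply IHm; intros; apply H; lia. apply H; lia. Qed.

Lemma deriv_locconst f L e : derivable_pt_lim f 0 L -> 0 < e -> (forall h, Rabs h < e -> f h = f 0) -> L = 0.
Proof. intros H He Hf. destruct (Req_dec L 0); auto. exfalso.
  assert (HL : 0 < Rabs L) by (apply Rabs_pos_lt; auto).
  destruct (H (Rabs L) HL) as [del Hdel].
  set (h := Rmin del e / 2).
  assert (Hm : 0 < Rmin del e) by (apply Rmin_pos; [apply cond_pos| auto]).
  assert (Hh : 0 < h) by (unfold h; lra).
  assert (Hhd : Rabs h < del). { rewrite Rabs_pos_eq by lra. pose proof (Rmin_l del e). unfold h; lra. }
  assert (Hhe : Rabs h < e). { rewrite Rabs_pos_eq by lra. pose proof (Rmin_r del e). unfold h; lra. }
  specialize (Hdel h ltac:(lra) Hhd). rewrite Rplus_0_l, Hf in Hdel by auto.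
  replace ((f 0 - f 0) / h - L) with (- L) in Hdel by (field; lra). rewrite Rabs_Ropp in Hdel. lra. Qed.

Theorem theorem2p3
  (n p : nat) (U : (nat -> R) -> Prop)
  (P : (nat -> R) -> nat -> nat -> R)
  (dP : (nat -> R) -> nat -> nat -> nat -> R)
  (pi : (nat -> R) -> nat -> R)
  (c : nat -> R) (pi0 : nat -> R) (th0 : nat -> R) :
  open_Rp p U ->
  (* transition matrices, regular, with stationary distribution pi_th *)
  (forall th, U th -> is_transition n (P th)) ->
  (forall th, U th -> regular n (P th)) ->
  (forall th, U th -> is_stationary n (P th) (pi th)) ->
  (* dP th i j l = partial derivative of (P_th)_ij w.r.t. th_l *)
  (forall th i j l, U th -> (i < n)%nat -> (j < n)%nat -> (l < p)%nat ->
     derivable_pt_lim (fun t => P (shift th l t) i j) 0 (dP th i j l)) ->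
  (* partial derivatives are continuous on U (C^1) *)
  (forall th i j l, U th -> (i < n)%nat -> (j < n)%nat -> (l < p)%nat ->
     forall eps, 0 < eps -> exists delta, 0 < delta /\
       forall th', U th' -> close p th th' delta ->
         Rabs (dP th' i j l - dP th i j l) < eps) ->
  (* zero entries have zero gradient *)
  (forall th i j l, U th -> (i < n)%nat -> (j < n)%nat -> (l < p)%nat ->
     P th i j = 0 -> dP th i j l = 0) ->
  is_distribution n pi0 ->
  U th0 ->
  exists (g : nat -> R) (K1 K2 : R),
    (* g = gradient of c' pi_th at th0 *)
    (forall l, (l < p)%nat ->
       derivable_pt_lim (fun t => rsum n (fun i => c i * pi (shift th0 l t) i)) 0 (g l)) /\
    forall N : nat, (1 <= N)%nat ->
      (* (a) bias O(1/N), Euclidean norm *)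
      sqrt (rsum p (fun l =>
              Rsqr (expect n pi0 (P th0) N (fun x => estimator c (P th0) (dP th0) N x l)
                    - g l)))
        <= K1 / INR N /\
      (* (b) trace of covariance O(N) *)
      rsum p (fun l =>
          expect n pi0 (P th0) N (fun x => Rsqr (estimator c (P th0) (dP th0) N x l))
          - Rsqr (expect n pi0 (P th0) N (fun x => estimator c (P th0) (dP th0) N x l)))
        <= K2 * INR N.
Proof.
  intros Hopen Htr Hreg Hst Hder Hcont Hzero Hpi0 HU0.
  assert (Hn : (0 < n)%nat).
  { destruct n; [|lia]. destruct Hpi0 as [_ H]. simpl in H. lra. }
  destruct Hopen as [Hin Hop]. destruct (Hop th0 HU0) as [eps0 [Heps0 Heps]].
  assert (Ush : forall l t, (l < p)%nat -> Rabs t < eps0 -> U (shift th0 l t)).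
  { intros l t Hl Ht. apply Heps.
    - intros m Hm. unfold shift. destruct (Nat.eqb_spec m l); [lia|]. apply (Hin th0 HU0); auto.
    - intros m Hm. unfold shift. destruct (Nat.eqb m l).
      replace (th0 m + t - th0 m) with t by ring. auto.
      rewrite Rminus_diag, Rabs_R0. auto. }
  assert (sh0 : forall l, shift th0 l 0 = th0).
  { intros l. apply functional_extensionality. intros m. unfold shift. destruct (Nat.eqb m l); ring. }
  assert (HP : stoch n (P th0)) by exact (Htr th0 HU0).
  assert (Hrow : forall a l, (a < n)%nat -> (l < p)%nat -> rsum n (fun b => dP th0 a b l) = 0).
  { intros a l Ha Hl.
    apply (deriv_locconst (fun t => rsum n (fun b => P (shift th0 l t) a b)) _ eps0); auto.
    apply (deriv_rsum n (fun b t => P (shift th0 l t) a b)). intros b Hb. apply Hder; auto.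
    intros h Hh. simpl. rewrite sh0.
    destruct (Htr _ (Ush l h Hl Hh)) as [_ H1]. rewrite H1 by auto. destruct HP as [_ H2]. rewrite H2; auto. }
  assert (HdPz : forall a b l, (a < n)%nat -> (b < n)%nat -> (l < p)%nat -> P th0 a b * (dP th0 a b l / P th0 a b) = dP th0 a b l).
  { intros a b l Ha Hb Hl. destruct (Req_dec (P th0 a b) 0) as [E|E].
    rewrite E, (Hzero th0 a b l HU0 Ha Hb Hl E). ring. field. auto. }
  destruct (geo n (P th0) HP Hn (pi th0) (Hst th0 HU0) (Hreg th0 HU0)) as [C [rho [HC [Hrho Hgeo]]]].
  set (Dall := rsum p (fun l => Dl n (dP th0) l)).
  set (Bc := (C * Cw n c C * Dall + Dall * Cw n c C) / (1 - rho) ^ 2).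
  exists (gl n (P th0) (dP th0) (pi th0) c), (INR p * Bc), (INR p * (Rsqr (absum n c) * Rsqr (Dmx n p (P th0) (dP th0)))).
  split.
  - intros l Hl.
    assert (Ht : forall t, Rabs t < eps0 -> stoch n (P (shift th0 l t)) /\ is_stationary n (P (shift th0 l t)) (pi (shift th0 l t))).
    { intros t Ht. split. exact (Htr _ (Ush l t Hl Ht)). apply Hst. apply Ush; auto. }
    assert (Hg' : forall k i j, (i < n)%nat -> (j < n)%nat -> Rabs (lpow n (P (shift th0 l 0)) k i j - pi (shift th0 l 0) j) <= C * rho ^ k).
    { rewrite sh0. auto. }
    pose proof (deriv_main n (fun t => P (shift th0 l t)) (fun t => pi (shift th0 l t)) (fun a b => dP th0 a b l) c C rho eps0
      Heps0 Ht Hrho HC Hg') as X.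
    cbv beta in X. rewrite sh0 in X. apply X. intros a b Ha Hb. apply Hder; auto.
  - intros N HN.
    assert (HNp : 0 < INR N) by (apply lt_0_INR; lia).
    assert (HDall : forall l, (l < p)%nat -> Dl n (dP th0) l <= Dall).
    { intros. apply (rsum_term_le p (fun l => Dl n (dP th0) l)); auto. intros; apply Dl_pos. }
    assert (HCw : 0 <= Cw n c C) by (apply Cw_pos; auto).
    assert (HBc : 0 <= Bc).
    { unfold Bc. apply Rmult_le_pos. assert (0 <= Dall) by (apply rsum_nonneg; intros; apply Dl_pos).
      assert (0 <= C * Cw n c C * Dall + Dall * Cw n c C) by (apply Rplus_le_le_0_compat; [apply Rmult_le_pos; [apply Rmult_le_pos|]|apply Rmult_le_pos]; auto).
      auto. left; apply Rinv_0_lt_compat, pow_lt; lra. }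
    split.
    + assert (Hb : forall l, (l < p)%nat -> Rabs (expect n pi0 (P th0) N (fun x => estimator c (P th0) (dP th0) N x l) - gl n (P th0) (dP th0) (pi th0) c l) <= Bc / INR N).
      { intros l Hl. eapply Rle_trans. { apply (bias n p (P th0) (dP th0) (pi th0) pi0 c C rho); auto. }
        unfold Rdiv. apply Rmult_le_compat_r. left; apply Rinv_0_lt_compat; auto.
        unfold Bc. unfold Rdiv. apply Rmult_le_compat_r. left; apply Rinv_0_lt_compat, pow_lt; lra.
        specialize (HDall l Hl). pose proof (Dl_pos n (dP th0) l).
        apply Rplus_le_compat. apply Rmult_le_compat_l; auto. apply Rmult_le_pos; auto.
        apply Rmult_le_compat_r; auto. }
      assert (HBN : 0 <= Bc / INR N) by (apply Rmult_le_pos; auto; left; apply Rinv_0_lt_compat; auto).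
      apply Rle_trans with (sqrt (Rsqr (INR p * Bc / INR N))).
      apply sqrt_le_1_alt.
      apply Rle_trans with (rsum p (fun _ => Rsqr (Bc / INR N))).
      apply rsum_le. intros l Hl. apply Rsqr_le_abs_1. rewrite (Rabs_pos_eq (Bc / INR N)) by auto. apply Hb; auto.
      rewrite rsum_const. replace (INR p * Bc / INR N) with (INR p * (Bc / INR N)) by (field; lra).
      rewrite Rsqr_mult. apply Rmult_le_compat_r. apply Rle_0_sqr.
      destruct p as [|pp]. simpl. unfold Rsqr; lra. rewrite S_INR. pose proof (pos_INR pp). unfold Rsqr; nra.
      rewrite sqrt_Rsqr. lra. apply Rmult_le_pos; [apply Rmult_le_pos|]; auto. apply pos_INR. left; apply Rinv_0_lt_compat; auto.
    + apply Rle_trans with (rsum p (fun _ => Rsqr (absum n c) * Rsqr (Dmx n p (P th0) (dP th0)) * INR N)).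
      apply rsum_le. intros l Hl.
      pose proof (est_sq n p (P th0) (dP th0) pi0 c HP Hn Hpi0 HdPz Hrow l N Hl HN).
      pose proof (Rle_0_sqr (expect n pi0 (P th0) N (fun x => estimator c (P th0) (dP th0) N x l))). lra.
      rewrite rsum_const. right; ring.
Qed.
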